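(* Let $L$ be a pomset language. The following are equivalent: (1) $L$ is series-rational, i.e. $L=[\![e]\!]$ for some series-rational expression $e$; (2) $L=L_A(q)$ for some state $q$ of some finite and fork-acyclic pomset automaton $A$.
   Context: Fix a finite alphabet $\Sigma$. Pomsets are isomorphism classes of finite labelled posets over $\Sigma$; a pomset language is a set of pomsets. $1$ is the empty pomset; sequential composition $U\cdot V$ is the disjoint union with all elements of $U$ below all elements of $V$; parallel composition $U\parallel V$ is the disjoint union of orders. $\mathsf{SP}(\Sigma)$ is the smallest set containing $1$ and the one-element pomsets $a\in\Sigma$ closed under $\cdot,\parallel$; these lift pointwise to languages, and $L^*=\bigcup_n L^n$ with $L^0=\{1\}$, $L^{n+1}=L\cdot L^n$. Series-rational expressions: $e,f::=0\mid 1\mid a\in\Sigma\mid e+f\mid e\cdot f\mid e\parallel f\mid e^*$ with $[\![0]\!]=\emptyset$, $[\![1]\!]=\{1\}$, $[\![a]\!]=\{a\}$, $[\![e+f]\!]=[\![e]\!]\cup[\![f]\!]$, $[\![e\cdot f]\!]=[\![e]\!]\cdot[\![f]\!]$, $[\![e\parallel f]\!]=[\![e]\!]\parallel[\![f]\!]$, $[\![e^*]\!]=[\![e]\!]^*$. A pomset automaton is $A=\langle Q,F,\delta,\gamma\rangle$ with $F\subseteq Q$, $\delta:Q\times\Sigma\to2^Q$, $\gamma:Q\times\mathbb{M}(Q)\to2^Q$ ($\mathbb{M}(Q)$ finite multisets over $Q$), each $q$ having finitely many $\phi$ with $\gamma(q,\phi)\ne\emptyset$; finite if $Q$ is finite.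 The run relation $\to_A$ is the smallest relation with: $q\xrightarrow{1}_A q$; $q\xrightarrow{a}_A q'$ if $q'\in\delta(q,a)$; $q\xrightarrow{U\cdot V}_A q'$ if $q\xrightarrow{U}_A q''\xrightarrow{V}_A q'$; $q\xrightarrow{U_1\parallel\cdots\parallel U_n}_A q'$ if $q'\in\gamma(q,\{\!|q_1,\dots,q_n|\!\})$ and each $q_i\xrightarrow{U_i}_A q_i'$ for some $q_i'\in F$. $L_A(q)=\{U\in\mathsf{SP}(\Sigma)\mid\exists q'\in F.\ q\xrightarrow{U}_A q'\}$. The support relation $\preceq_A$ is the smallest preorder with $q'\preceq_A q$ whenever $q'\in\delta(q,a)$, or $q'\in\gamma(q,\phi)$, or $q'\in\phi$ with $\gamma(q,\phi)\ne\emptyset$; $A$ is fork-acyclic if $r\in\phi$ and $\gamma(q,\phi)\ne\emptyset$ imply $q\not\preceq_A r$. *)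

(* Defs.v *)
From Stdlib Require Import Relation_Operators.
From Stdlib Require List.
From mathcomp Require Import all_boot.
Set Implicit Arguments. Unset Strict Implicit. Unset Printing Implicit Defensive.

(** * Labelled (pre)orders over an alphabet; pomsets are their iso classes. *)
Record lposet (Sigma : Type) := LPoset {
  lp_n : nat;
  lp_lab : 'I_lp_n -> Sigma;
  lp_le : rel 'I_lp_n }.
Arguments LPoset {Sigma} lp_n lp_lab lp_le.
Arguments lp_n {Sigma} l.
Arguments lp_lab {Sigma} l _.
Arguments lp_le {Sigma} l _ _.

Section Pomsets.
Variable Sigma : finType.
Notation lp := (lposet Sigma).

Definition is_poset (P : lp) : Prop :=
  [/\ reflexive (lp_le P), antisymmetric (lp_le P) & transitive (lp_le P)].

Definition lp_iso (P1 P2 : lp) : Prop :=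
  exists f : 'I_(lp_n P1) -> 'I_(lp_n P2),
    [/\ bijective f,
        (forall x, lp_lab P2 (f x) = lp_lab P1 x) &
        (forall x y, lp_le P2 (f x) (f y) = lp_le P1 x y)].

Definition pomset_language (L : lp -> Prop) : Prop :=
  (forall P, L P -> is_poset P) /\ (forall P P', lp_iso P P' -> L P -> L P').

Definition lp_empty : lp := LPoset 0 (fun i => match i with Ordinal _ h => False_rect _ (notF h) end)
  (fun _ _ => true).
Definition lp_atom (a : Sigma) : lp := LPoset 1 (fun _ => a) (fun _ _ => true).

Definition lp_seq (U V : lp) : lp :=
  LPoset (lp_n U + lp_n V)
    (fun x => match split x with inl a => lp_lab U a | inr b => lp_lab V b end)
    (fun x y => match split x, split y with
                | inl a, inl b => lp_le U a b
                | inr a, inr b => lp_le V a b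
                | inl _, inr _ => true
                | inr _, inl _ => false end).

Definition lp_par (U V : lp) : lp :=
  LPoset (lp_n U + lp_n V)
    (fun x => match split x with inl a => lp_lab U a | inr b => lp_lab V b end)
    (fun x y => match split x, split y with
                | inl a, inl b => lp_le U a b
                | inr a, inr b => lp_le V a b
                | _, _ => false end).

Definition lp_bigpar (s : seq lp) : lp := foldr lp_par lp_empty s.

Inductive SP : lp -> Prop :=
| SP_one P : lp_n P = 0 -> SP P
| SP_atom a P : lp_iso P (lp_atom a) -> SP P
| SP_seq U V P : SP U -> SP V -> lp_iso P (lp_seq U V) -> SP P
| SP_par U V P : SP U -> SP V -> lp_iso P (lp_par U V) -> SP P.

Definition lang_seq (L K : lp -> Prop) (P : lp) : Prop :=
  exists U V, [/\ L U, K V & lp_iso P (lp_seq U V)].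
Definition lang_par (L K : lp -> Prop) (P : lp) : Prop :=
  exists U V, [/\ L U, K V & lp_iso P (lp_par U V)].
Fixpoint lang_pow (L : lp -> Prop) (n : nat) : lp -> Prop :=
  match n with
  | 0 => fun P => lp_n P = 0
  | n.+1 => lang_seq L (lang_pow L n)
  end.
Definition lang_star (L : lp -> Prop) (P : lp) : Prop := exists n, lang_pow L n P.

Inductive srexp : Type :=
| e_zero | e_one | e_atom of Sigma
| e_plus of srexp & srexp
| e_seq of srexp & srexp
| e_par of srexp & srexp
| e_star of srexp.

Fixpoint sem (e : srexp) : lp -> Prop :=
  match e with
  | e_zero => fun _ => False
  | e_one => fun P => lp_n P = 0
  | e_atom a => fun P => lp_iso P (lp_atom a)
  | e_plus e f => fun P => sem e P \/ sem f P
  | e_seq e f => lang_seq (sem e) (sem f)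
  | e_par e f => lang_par (sem e) (sem f)
  | e_star e => lang_star (sem e)
  end.

(** Finite pomset automata: states form a finType; multisets over Q are
    represented as functions Q -> nat (finite support since Q is finite). *)
Record pomset_automaton := PA {
  pa_Q : finType;
  pa_F : {set pa_Q};
  pa_delta : pa_Q -> Sigma -> {set pa_Q};
  pa_gamma : pa_Q -> {ffun pa_Q -> nat} -> {set pa_Q};
  pa_gamma_fin : forall q, exists s : seq {ffun pa_Q -> nat},
      forall phi, pa_gamma q phi != set0 -> phi \in s }.

Variable A : pomset_automaton.
Notation Q := (pa_Q A).

Definition mset_of (s : seq Q) : {ffun Q -> nat} := [ffun q => count_mem q s].

Inductive run : Q -> lp -> Q -> Prop :=
| run_one q P : lp_n P = 0 -> run q P q
| run_atom q a q' P : q' \in pa_delta q a -> lp_iso P (lp_atom a) -> run q P q'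
| run_seq q q'' q' U V P :
    run q U q'' -> run q'' V q' -> lp_iso P (lp_seq U V) -> run q P q'
| run_par q q' (ps : seq (Q * lp)) P :
    q' \in pa_gamma q (mset_of (map fst ps)) ->
    (forall x, List.In x ps -> exists qf, qf \in pa_F A /\ run x.1 x.2 qf) ->
    lp_iso P (lp_bigpar (map snd ps)) ->
    run q P q'.

Definition LA (q : Q) (P : lp) : Prop :=
  SP P /\ exists q', q' \in pa_F A /\ run q P q'.

(** Support relation: smallest preorder generated by [supp_step]
    ([supp_step q' q] means q' <=_A q directly). *)
Definition supp_step (q' q : Q) : Prop :=
  (exists a, q' \in pa_delta q a) \/
  (exists phi : {ffun Q -> nat}, q' \in pa_gamma q phi) \/
  (exists phi : {ffun Q -> nat}, 0 < phi q' /\ pa_gamma q phi != set0).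

Definition supports (q' q : Q) : Prop := clos_refl_trans Q supp_step q' q.

Definition fork_acyclic : Prop :=
  forall q (phi : {ffun Q -> nat}) r, 0 < phi r -> pa_gamma q phi != set0 -> ~ supports q r.

End Pomsets.

Arguments fork_acyclic {Sigma} A.
Arguments LA {Sigma} A q P.

(* Main.v *)
Require Import Defs.
From HB Require Import structures.
From Stdlib Require Import Relation_Operators ClassicalEpsilon.
From Stdlib Require List.
From mathcomp Require Import all_boot.
Set Implicit Arguments. Unset Strict Implicit. Unset Printing Implicit Defensive.

Section Iso.
Variable Sigma : finType.
Notation lp := (lposet Sigma).
Notation iso := (@lp_iso Sigma).

Lemma iso_refl P : iso P P.
Proof. exists id; split => //; exists id => //. Qed.

Lemma iso_sym P1 P2 : iso P1 P2 -> iso P2 P1.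
Proof.
case=> f [[g fK gK] hl hle]; exists g; split.
- by exists f.
- by move=> x; rewrite -{2}[x]gK hl.
- by move=> x y; rewrite -{2}[x]gK -{2}[y]gK hle.
Qed.

Lemma iso_trans P1 P2 P3 : iso P1 P2 -> iso P2 P3 -> iso P1 P3.
Proof.
case=> f [bf lf lef] [g [bg lg leg]]; exists (g \o f); split.
- exact: bij_comp.
- by move=> x /=; rewrite lg lf.
- by move=> x y /=; rewrite leg lef.
Qed.

Lemma iso_n0 P1 P2 : iso P1 P2 -> lp_n P1 = 0 -> lp_n P2 = 0.
Proof.
case=> f [[g fK gK] _ _] h; case E: (lp_n P2) => [//|k].
have y : 'I_(lp_n P2) by rewrite E; exact: ord0.
by case: (g y) => m; rewrite h.
Qed.

Lemma iso_empty P1 P2 : lp_n P1 = 0 -> lp_n P2 = 0 -> iso P1 P2.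
Proof.
move=> h1 h2.
have F1 : forall x : 'I_(lp_n P1), False by case=> m; rewrite h1.
have F2 : forall x : 'I_(lp_n P2), False by case=> m; rewrite h2.
exists (fun x => match F1 x with end); split.
- by exists (fun y => match F2 y with end) => x; [case: (F1 x) | case: (F2 x)].
- by move=> x; case: (F1 x).
- by move=> x; case: (F1 x).
Qed.

Definition smap m n m' n' (f : 'I_m -> 'I_m') (g : 'I_n -> 'I_n') (x : 'I_(m + n)) : 'I_(m' + n') :=
  unsplit (match split x with inl a => inl (f a) | inr b => inr (g b) end).

Lemma smap_bij m n m' n' (f : 'I_m -> 'I_m') (g : 'I_n -> 'I_n') :
  bijective f -> bijective g -> bijective (smap f g).
Proof.
case=> fi fK fiK [gi gK giK]; exists (smap fi gi) => x; rewrite /smap;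
  rewrite -[x]splitK; case: (split x) => a; rewrite ?unsplitK ?fK ?gK ?fiK ?giK //.
Qed.

Lemma seq_congr U U' V V' : iso U U' -> iso V V' -> iso (lp_seq U V) (lp_seq U' V').
Proof.
case=> f [bf lf lef] [g [bg lg leg]]; exists (smap f g); split.
- exact: smap_bij.
- move=> x; rewrite /smap /= -[x]splitK; case: (split x) => a; by rewrite ?unsplitK.
- move=> x y; rewrite /smap /= -[x]splitK -[y]splitK.
  by case: (split x) => a; case: (split y) => b; rewrite ?unsplitK.
Qed.

Lemma par_congr U U' V V' : iso U U' -> iso V V' -> iso (lp_par U V) (lp_par U' V').
Proof.
case=> f [bf lf lef] [g [bg lg leg]]; exists (smap f g); split.
- exact: smap_bij.
- move=> x; rewrite /smap /= -[x]splitK; case: (split x) => a; by rewrite ?unsplitK.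
- move=> x y; rewrite /smap /= -[x]splitK -[y]splitK.
  by case: (split x) => a; case: (split y) => b; rewrite ?unsplitK.
Qed.

Definition amap u v w (x : 'I_(u + v + w)) : 'I_(u + (v + w)) :=
  match split x with
  | inl y => match split y with
             | inl a => unsplit (inl a)
             | inr b => unsplit (inr (unsplit (inl b)))
             end
  | inr c => unsplit (inr (unsplit (inr c)))
  end.
Definition amapi u v w (x : 'I_(u + (v + w))) : 'I_(u + v + w) :=
  match split x with
  | inl a => unsplit (inl (unsplit (inl a)))
  | inr y => match split y with
             | inl b => unsplit (inl (unsplit (inr b)))
             | inr c => unsplit (inr c)
             end
  end.

Lemma split_l m n (a : 'I_m) : split (lshift n a) = inl a.
Proof. exact: (unsplitK (inl a)). Qed.
Lemma split_r m n (a : 'I_n) : split (rshift m a) = inr a.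
Proof. exact: (unsplitK (inr a)). Qed.

Ltac crush := repeat (rewrite ?unsplitK ?split_l ?split_r /=;
   match goal with |- context [split ?y] => is_var y;
     rewrite -[y]splitK; case: (split y) => ? end);
  do 3 rewrite ?unsplitK ?split_l ?split_r /=.

Lemma seq_assoc U V W : iso (lp_seq (lp_seq U V) W) (lp_seq U (lp_seq V W)).
Proof.
exists (@amap _ _ _); split.
- by exists (@amapi _ _ _) => x; rewrite /amap /amapi; crush.
- by move=> x; rewrite /amap /=; crush.
- by move=> x y; rewrite /amap /=; crush.
Qed.

Lemma seq_unit_l U V : lp_n U = 0 -> iso (lp_seq U V) V.
Proof.
move=> h; have F : forall x : 'I_(lp_n U), False by case=> m; rewrite h.
exists (fun x => match split x with inl a => match F a with end | inr b => b end); split.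
- exists (fun b => rshift (lp_n U) b) => x; crush; first [done | match goal with a : _ |- _ => by case: (F a) end].
- move=> x; crush; first [done | match goal with a : _ |- _ => by case: (F a) end].
- move=> x y; crush; first [done | match goal with a : _ |- _ => by case: (F a) end].
Qed.

Lemma seq_unit_r U V : lp_n V = 0 -> iso (lp_seq U V) U.
Proof.
move=> h; have F : forall x : 'I_(lp_n V), False by case=> m; rewrite h.
exists (fun x => match split x with inl a => a | inr b => match F b with end end); split.
- exists (fun b => lshift (lp_n V) b) => x; crush; first [done | match goal with a : _ |- _ => by case: (F a) end].
- move=> x; crush; first [done | match goal with a : _ |- _ => by case: (F a) end].
- move=> x y; crush; first [done | match goal with a : _ |- _ => by case: (F a) end].
Qed.

Lemma par_unit_r U V : lp_n V = 0 -> iso (lp_par U V) U.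
Proof.
move=> h; have F : forall x : 'I_(lp_n V), False by case=> m; rewrite h.
exists (fun x => match split x with inl a => a | inr b => match F b with end end); split.
- exists (fun b => lshift (lp_n V) b) => x; crush; first [done | match goal with a : _ |- _ => by case: (F a) end].
- move=> x; crush; first [done | match goal with a : _ |- _ => by case: (F a) end].
- move=> x y; crush; first [done | match goal with a : _ |- _ => by case: (F a) end].
Qed.

Definition cmap m n (x : 'I_(m + n)) : 'I_(n + m) :=
  unsplit (match split x with inl a => inr a | inr b => inl b end).

Lemma par_comm U V : iso (lp_par U V) (lp_par V U).
Proof.
exists (@cmap _ _); split.
- by exists (@cmap _ _) => x; rewrite /cmap; crush.
- by move=> x; rewrite /cmap; crush.
- by move=> x y; rewrite /cmap; crush.
Qed.
End Iso.

Section Sem.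
Variable Sigma : finType.
Notation lp := (lposet Sigma).
Notation iso := (@lp_iso Sigma).

Lemma lang_seq_iso (L K : lp -> Prop) P P' : iso P P' -> lang_seq L K P -> lang_seq L K P'.
Proof. move=> h [U [V [hU hV hP]]]; exists U, V; split => //; exact: iso_trans (iso_sym h) hP. Qed.

Lemma lang_par_iso (L K : lp -> Prop) P P' : iso P P' -> lang_par L K P -> lang_par L K P'.
Proof. move=> h [U [V [hU hV hP]]]; exists U, V; split => //; exact: iso_trans (iso_sym h) hP. Qed.

Lemma sem_iso (e : srexp Sigma) P P' : iso P P' -> sem e P -> sem e P'.
Proof.
elim: e P P' => //=.
- move=> P P' h; exact: iso_n0.
- move=> a P P' h h'; exact: iso_trans (iso_sym h) h'.
- by move=> e1 IH1 e2 IH2 P P' h [H|H]; [left; apply: IH1 h H | right; apply: IH2 h H].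
- move=> e1 _ e2 _ P P' h H; exact: lang_seq_iso h H.
- move=> e1 _ e2 _ P P' h H; exact: lang_par_iso h H.
- move=> e1 _ P P' h [[|n] H]; first by exists 0; exact: iso_n0 h H.
  exists n.+1; exact: lang_seq_iso h H.
Qed.
End Sem.

Section Sem2.
Variable Sigma : finType.
Notation lp := (lposet Sigma).
Notation iso := (@lp_iso Sigma).

Lemma sem_SP (e : srexp Sigma) P : sem e P -> SP P.
Proof.
elim: e P => //=.
- by move=> P h; apply: SP_one.
- by move=> a P h; apply: SP_atom h.
- by move=> e1 IH1 e2 IH2 P [H|H]; [apply: IH1 | apply: IH2].
- move=> e1 IH1 e2 IH2 P [U [V [hU hV hP]]]; apply: SP_seq hP; [exact: IH1 | exact: IH2].
- move=> e1 IH1 e2 IH2 P [U [V [hU hV hP]]]; apply: SP_par hP; [exact: IH1 | exact: IH2].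
- move=> e1 IH1 P [n]; elim: n P => [|n IHn] P /=; first by move=> h; apply: SP_one.
  move=> [U [V [hU hV hP]]]; apply: SP_seq hP; [exact: IH1 | exact: IHn].
Qed.

Definition expr (L : lp -> Prop) := exists e : srexp Sigma, forall P, L P <-> sem e P.

Lemma expr_ext (L K : lp -> Prop) : (forall P, L P <-> K P) -> expr L -> expr K.
Proof. move=> h [e he]; exists e => P; rewrite -h; exact: he. Qed.

Lemma expr_zero (L : lp -> Prop) : (forall P, ~ L P) -> expr L.
Proof. by move=> h; exists (e_zero Sigma) => P; split => // /h. Qed.

Lemma expr_one : expr (fun P => lp_n P = 0).
Proof. by exists (e_one Sigma). Qed.

Lemma expr_union (T : eqType) (l : seq T) (F : T -> lp -> Prop) :
  (forall x, x \in l -> expr (F x)) -> expr (fun P => exists x, x \in l /\ F x P).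
Proof.
elim: l => [|y l IH] h.
  by apply: expr_zero => P [x []].
have [e1 he1] := h y (mem_head _ _).
have [e2 he2] : expr (fun P => exists x, x \in l /\ F x P).
  by apply: IH => x hx; apply: h; rewrite inE hx orbT.
exists (e_plus e1 e2) => P /=; rewrite -he1 -he2; split.
- case=> x []; rewrite inE => /orP [/eqP -> | hx] hF; first by left.
  by right; exists x.
- case=> [hF | [x [hx hF]]]; first by exists y; rewrite mem_head.
  by exists x; rewrite inE hx orbT.
Qed.

Lemma expr_plus (L K : lp -> Prop) : expr L -> expr K -> expr (fun P => L P \/ K P).
Proof. move=> [e1 h1] [e2 h2]; exists (e_plus e1 e2) => P /=; by rewrite h1 h2. Qed.

Lemma expr_seq (L K : lp -> Prop) : expr L -> expr K -> expr (lang_seq L K).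
Proof.
move=> [e1 h1] [e2 h2]; exists (e_seq e1 e2) => P /=; split;
  move=> [U [V [hU hV hP]]]; exists U, V; split => //; by [rewrite -h1 | rewrite -h2 | rewrite h1 | rewrite h2].
Qed.

Lemma expr_par (L K : lp -> Prop) : expr L -> expr K -> expr (lang_par L K).
Proof.
move=> [e1 h1] [e2 h2]; exists (e_par e1 e2) => P /=; split;
  move=> [U [V [hU hV hP]]]; exists U, V; split => //; by [rewrite -h1 | rewrite -h2 | rewrite h1 | rewrite h2].
Qed.

Lemma lang_pow_ext (L K : lp -> Prop) : (forall P, L P <-> K P) ->
  forall n P, lang_pow L n P <-> lang_pow K n P.
Proof.
move=> h; elim=> [|n IH] P //=; split;
  move=> [U [V [hU hV hP]]]; exists U, V; split => //; by [rewrite -h | rewrite -IH | rewrite h | rewrite IH].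
Qed.

Lemma expr_star (L : lp -> Prop) : expr L -> expr (lang_star L).
Proof.
move=> [e1 h1]; exists (e_star e1) => P /=; split; move=> [n hn]; exists n;
  by [rewrite -(lang_pow_ext h1) | rewrite (lang_pow_ext h1)].
Qed.
End Sem2.


Section Enc.
Variable Sigma : finType.
Fixpoint enc (e : srexp Sigma) : GenTree.tree Sigma :=
  match e with
  | e_zero => GenTree.Node 0 [::]
  | e_one => GenTree.Node 1 [::]
  | e_atom a => GenTree.Leaf a
  | e_plus f g => GenTree.Node 2 [:: enc f; enc g]
  | e_seq f g => GenTree.Node 3 [:: enc f; enc g]
  | e_par f g => GenTree.Node 4 [:: enc f; enc g]
  | e_star f => GenTree.Node 5 [:: enc f]
  end.
Fixpoint dec (t : GenTree.tree Sigma) : option (srexp Sigma) :=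
  match t with
  | GenTree.Leaf a => Some (e_atom a)
  | GenTree.Node 0 [::] => Some (e_zero Sigma)
  | GenTree.Node 1 [::] => Some (e_one Sigma)
  | GenTree.Node 2 [:: t1; t2] =>
      match dec t1, dec t2 with Some f, Some g => Some (e_plus f g) | _, _ => None end
  | GenTree.Node 3 [:: t1; t2] =>
      match dec t1, dec t2 with Some f, Some g => Some (e_seq f g) | _, _ => None end
  | GenTree.Node 4 [:: t1; t2] =>
      match dec t1, dec t2 with Some f, Some g => Some (e_par f g) | _, _ => None end
  | GenTree.Node 5 [:: t1] =>
      match dec t1 with Some f => Some (e_star f) | _ => None end
  | _ => None
  end.
Lemma encK : pcancel enc dec.
Proof. by elim=> //= [f -> g -> | f -> g -> | f -> g -> | f ->]. Qed.
End Enc.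

HB.instance Definition _ (Sigma : finType) := Countable.copy (srexp Sigma) (pcan_type (@encK Sigma)).



Section RunInd.
Variable Sigma : finType.
Variable A : pomset_automaton Sigma.
Notation Q := (pa_Q A).
Notation lp := (lposet Sigma).
Variable Pr : Q -> lp -> Q -> Prop.
Hypothesis H1 : forall q P, lp_n P = 0 -> Pr q P q.
Hypothesis H2 : forall q a q' P, q' \in pa_delta q a -> lp_iso P (lp_atom a) -> Pr q P q'.
Hypothesis H3 : forall q q'' q' U V P, run q U q'' -> Pr q U q'' -> run q'' V q' -> Pr q'' V q' ->
  lp_iso P (lp_seq U V) -> Pr q P q'.
Hypothesis H4 : forall q q' (ps : seq (Q * lp)) P,
  q' \in pa_gamma q (mset_of (map fst ps)) ->
  (forall x, List.In x ps -> exists qf, qf \in pa_F A /\ run x.1 x.2 qf /\ Pr x.1 x.2 qf) ->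
  lp_iso P (lp_bigpar (map snd ps)) -> Pr q P q'.

Fixpoint run_ind' q P q' (r : run q P q') {struct r} : Pr q P q'.
Proof.
case: r => {q P q'}.
- by move=> q P h; apply: H1.
- by move=> q a q' P h1 h2; apply: H2 h1 h2.
- move=> q q'' q' U V P r1 r2 h; apply: H3 r1 (run_ind' _ _ _ r1) r2 (run_ind' _ _ _ r2) h.
- move=> q q' ps P h hs hP; apply: H4 h _ hP => x hx.
  case: (hs x hx) => qf [hf r]; exists qf; split => //; split => //; exact: run_ind' _ _ _ r.
Qed.
End RunInd.


Section MsetLemmas.
Variable T : eqType.
Definition mset' (Q : finType) (l : seq Q) : {ffun Q -> nat} := [ffun q => count_mem q l].

Lemma mset_perm (Q : finType) (l1 l2 : seq Q) : mset' l1 = mset' l2 -> perm_eq l1 l2.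
Proof.
move=> h; rewrite /perm_eq; apply/allP => x _ /=.
by have := congr1 (fun f : {ffun Q -> nat} => f x) h; rewrite !ffunE => ->.
Qed.

Lemma mset_nil (Q : finType) (l : seq Q) : mset' l = mset' [::] -> l = [::].
Proof. by move/mset_perm/perm_small_eq; apply. Qed.

Lemma mset_one (Q : finType) (l : seq Q) x : mset' l = mset' [:: x] -> l = [:: x].
Proof. by move/mset_perm/perm_small_eq; apply. Qed.

Lemma mset_two (Q : finType) (l : seq Q) x y : mset' l = mset' [:: x; y] ->
  l = [:: x; y] \/ l = [:: y; x].
Proof.
move/mset_perm => h; have := perm_size h; case: l h => [|a [|b [|]]] //= h _.
have : a \in [:: x; y] by rewrite -(perm_mem h) mem_head.
rewrite !inE => /orP [/eqP ea | /eqP ea]; subst a.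
- by rewrite perm_cons in h; left; rewrite (perm_small_eq _ h).
- have h2 : perm_eq [:: y; b] [:: y; x].
    by apply: (perm_trans h); rewrite (perm_catC [:: x] [:: y]).
  by rewrite perm_cons in h2; right; rewrite (perm_small_eq _ h2).
Qed.

Lemma mset_pos (Q : finType) (l : seq Q) r : 0 < mset' l r -> r \in l.
Proof.
rewrite ffunE => h; apply/negPn/negP => /count_memPn E; by rewrite E in h.
Qed.
End MsetLemmas.

Section Construct.
Variable Sigma : finType.
Notation lp := (lposet Sigma).
Notation iso := (@lp_iso Sigma).
Notation ex := (srexp Sigma).

Fixpoint subterms (e : ex) : seq ex := e :: match e with
  | e_plus f g | e_seq f g | e_par f g => subterms f ++ subterms g
  | e_star f => subterms f | _ => [::] end.

Lemma sub_self e : e \in subterms e.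
Proof. by case: e => * /=; rewrite inE eqxx. Qed.

Lemma sub_trans y x z : x \in subterms y -> z \in subterms x -> z \in subterms y.
Proof.
elim: y x z => [||a|f IHf g IHg|f IHf g IHg|f IHf g IHg|f IHf] x z /=;
  rewrite in_cons => /orP [/eqP -> //|]; rewrite ?in_nil // ?mem_cat => h hz; rewrite inE ?mem_cat.
- by case/orP: h => h; [rewrite (IHf _ _ h hz) | rewrite (IHg _ _ h hz)]; rewrite ?orbT.
- by case/orP: h => h; [rewrite (IHf _ _ h hz) | rewrite (IHg _ _ h hz)]; rewrite ?orbT.
- by case/orP: h => h; [rewrite (IHf _ _ h hz) | rewrite (IHg _ _ h hz)]; rewrite ?orbT.
- by rewrite (IHf _ _ h hz) orbT.
Qed.

Variable e0 : ex.
Definition ST := seq_sub (subterms e0).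
Definition QS : finType := option ST.
Definition st (f : ex) : QS := insub f.

Lemma stE f (h : f \in subterms e0) : st f = Some (SeqSub h).
Proof. exact: insubT. Qed.

Lemma kid_l f g (h : f \in subterms g) (hg : g \in subterms e0) : f \in subterms e0.
Proof. exact: sub_trans hg h. Qed.

Definition Lang (q : QS) : lp -> Prop :=
  match q with None => fun P => lp_n P = 0 | Some s => sem (ssval s) end.

Lemma Lang_iso q P P' : iso P P' -> Lang q P -> Lang q P'.
Proof. case: q => [s|] /= h; [exact: sem_iso | exact: iso_n0]. Qed.

Lemma Lang_st f : f \in subterms e0 -> Lang (st f) = sem f.
Proof. by move=> h; rewrite (stE h). Qed.

Definition delta (q : QS) (a : Sigma) : {set QS} :=
  match q with
  | Some s => match ssval s with e_atom b => if b == a then [set None] else set0 | _ => set0 end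
  | None => set0 end.

Definition gamma (q : QS) (phi : {ffun QS -> nat}) : {set QS} :=
  match q with
  | Some s => match ssval s with
    | e_one => if phi == mset' [::] then [set None] else set0
    | e_plus f g => if (phi == mset' [:: st f]) || (phi == mset' [:: st g]) then [set None] else set0
    | e_seq f g => if phi == mset' [:: st f] then [set st g] else set0
    | e_par f g => if phi == mset' [:: st f; st g] then [set None] else set0
    | e_star f => (if phi == mset' [::] then [set None] else set0) :|:
                  (if phi == mset' [:: st f] then [set q] else set0)
    | _ => set0 end
  | None => set0 end.

Lemma gamma_fin q : exists s : seq {ffun QS -> nat}, forall phi, gamma q phi != set0 -> phi \in s.
Proof.
case: q => [s|] /=; last by exists [::] => phi; rewrite eqxx.
case: (ssval s) => [||a|f g|f g|f g|f]; try by exists [::] => phi; rewrite eqxx.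
- exists [:: mset' [::]] => phi; case: (phi =P mset' [::]) => [->|_]; by rewrite ?mem_head ?eqxx.
- exists [:: mset' [:: st f]; mset' [:: st g]] => phi.
  case: (phi =P mset' [:: st f]) => [->|_]; first by rewrite mem_head.
  case: (phi =P mset' [:: st g]) => [-> _|_]; first by rewrite !inE eqxx orbT.
  by rewrite eqxx.
- exists [:: mset' [:: st f]] => phi; case: (phi =P mset' [:: st f]) => [->|_]; by rewrite ?mem_head ?eqxx.
- exists [:: mset' [:: st f; st g]] => phi; case: (phi =P mset' [:: st f; st g]) => [->|_]; by rewrite ?mem_head ?eqxx.
- exists [:: mset' [::]; mset' [:: st f]] => phi.
  case: (phi =P mset' [::]) => [->|_]; first by rewrite mem_head.
  case: (phi =P mset' [:: st f]) => [-> _|_]; first by rewrite !inE eqxx orbT.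
  by rewrite setU0 eqxx.
Qed.

Definition Aut : pomset_automaton Sigma := @PA Sigma QS [set None] delta gamma gamma_fin.

Fixpoint esize (e : ex) : nat :=
  match e with
  | e_plus f g | e_seq f g | e_par f g => (esize f + esize g).+1
  | e_star f => (esize f).+1
  | _ => 1 end.

Definition rk (q : QS) : nat := match q with None => 0 | Some s => esize (ssval s) end.

Lemma rk_st f : rk (st f) <= esize f.
Proof. rewrite /st; case: insubP => [s _ <-|] //. Qed.

Lemma gamma_kids q phi r : gamma q phi != set0 -> 0 < phi r -> rk r < rk q.
Proof.
case: q => [s|] /=; last by rewrite eqxx.
case: (ssval s) => [||a|f g|f g|f g|f] /=; try by rewrite eqxx.
- by case: (phi =P mset' [::]) => [->|]; [move=> _ /mset_pos | rewrite eqxx].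
- case: (phi =P mset' [:: st f]) => [-> _ /mset_pos|_].
    by rewrite inE => /eqP ->; apply: leq_ltn_trans (rk_st f) _; rewrite ltnS leq_addr.
  case: (phi =P mset' [:: st g]) => [-> _ /mset_pos|_]; last by rewrite eqxx.
  by rewrite inE => /eqP ->; apply: leq_ltn_trans (rk_st g) _; rewrite ltnS leq_addl.
- case: (phi =P mset' [:: st f]) => [-> _ /mset_pos|]; last by rewrite eqxx.
  by rewrite inE => /eqP ->; apply: leq_ltn_trans (rk_st f) _; rewrite ltnS leq_addr.
- case: (phi =P mset' [:: st f; st g]) => [-> _ /mset_pos|]; last by rewrite eqxx.
  rewrite !inE => /orP [] /eqP ->.
  + by apply: leq_ltn_trans (rk_st f) _; rewrite ltnS leq_addr.
  + by apply: leq_ltn_trans (rk_st g) _; rewrite ltnS leq_addl.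
- case: (phi =P mset' [::]) => [-> _ /mset_pos|_] //.
  case: (phi =P mset' [:: st f]) => [-> _ /mset_pos|_]; last by rewrite setU0 eqxx.
  by rewrite inE => /eqP ->; apply: leq_ltn_trans (rk_st f) _.
Qed.

Lemma step_rk (q' q : QS) : supp_step (A:=Aut) q' q -> rk q' <= rk q.
Proof.
case=> [[a] | [[phi] | [phi [h1 h2]]]]; last by apply: ltnW; apply: gamma_kids h2 h1.
- case: q => [s|] /=; last by rewrite inE.
  by case: (ssval s) => [||b|f g|f g|f g|f] /=; rewrite ?inE //; case: ifP => _; rewrite ?inE // => /eqP ->.
- case: q => [s|] /=; last by rewrite inE.
  case E: (ssval s) => [||a|f g|f g|f g|f] /=; rewrite ?inE //.
  + by case: ifP; rewrite inE // => _ /eqP ->.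
  + by case: ifP; rewrite inE // => _ /eqP ->.
  + case: ifP; rewrite inE // => _ /eqP ->; apply: leq_trans (rk_st g) _.
    by rewrite -addSn leq_addl.
  + by case: ifP; rewrite inE // => _ /eqP ->.
  + case/orP; case: ifP; rewrite ?inE // => _ /eqP -> //.
    by rewrite /= E.
Qed.

Lemma Aut_acyclic : fork_acyclic Aut.
Proof.
move=> q phi r h1 h2 hs; have := gamma_kids h2 h1.
suff: rk q <= rk r by move=> a b; have := leq_ltn_trans a b; rewrite ltnn.
elim: hs => [x y /step_rk //| x //| x y z _ h _ h']; exact: leq_trans h h'.
Qed.

Lemma sub_kid_plus f g : e_plus f g \in subterms e0 -> f \in subterms e0 /\ g \in subterms e0.
Proof. move=> h; split; apply: kid_l h; by rewrite /= !inE mem_cat sub_self ?orbT. Qed.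
Lemma sub_kid_seq f g : e_seq f g \in subterms e0 -> f \in subterms e0 /\ g \in subterms e0.
Proof. move=> h; split; apply: kid_l h; by rewrite /= !inE mem_cat sub_self ?orbT. Qed.
Lemma sub_kid_par f g : e_par f g \in subterms e0 -> f \in subterms e0 /\ g \in subterms e0.
Proof. move=> h; split; apply: kid_l h; by rewrite /= !inE mem_cat sub_self ?orbT. Qed.
Lemma sub_kid_star f : e_star f \in subterms e0 -> f \in subterms e0.
Proof. move=> h; apply: kid_l h; by rewrite /= !inE sub_self ?orbT. Qed.

Lemma map_fst_nil (ps : seq (QS * lp)) : map fst ps = [::] -> ps = [::].
Proof. by case: ps. Qed.
Lemma map_fst_one (ps : seq (QS * lp)) x : map fst ps = [:: x] -> exists U, ps = [:: (x, U)].
Proof. by case: ps => [|[y U] [|]] //= [->]; exists U. Qed.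
Lemma map_fst_two (ps : seq (QS * lp)) x y : map fst ps = [:: x; y] ->
  exists U V, ps = [:: (x, U); (y, V)].
Proof. by case: ps => [|[x1 U] [|[y1 V] [|]]] //= [-> ->]; exists U, V. Qed.

Lemma par_e (U : lp) : iso (lp_par U (lp_empty Sigma)) U.
Proof. exact: par_unit_r. Qed.

Lemma sound q P q' : run (A:=Aut) q P q' -> forall W, Lang q' W -> Lang q (lp_seq P W).
Proof.
move: q P q'; apply: run_ind'.
- move=> q P h W hW; exact: Lang_iso (iso_sym (seq_unit_l W h)) hW.
- move=> [s|] a q' P //=; last by rewrite inE.
  case E: (ssval s) => [||b|f g|f g|f g|f] //=; rewrite ?inE //.
  case: eqP => [<-|]; rewrite ?inE // => /eqP -> hP W hW /=.
  exact: iso_trans (seq_unit_r P hW) hP.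
- move=> q q'' q' U V P _ IH1 _ IH2 hP W hW.
  apply: Lang_iso (IH1 _ (IH2 _ hW)).
  apply: iso_sym; exact: iso_trans (seq_congr hP (iso_refl W)) (seq_assoc U V W).
- move=> q q' ps P hg hs hP W hW.
  have hk : forall x, List.In x ps -> Lang x.1 x.2.
    move=> x /hs [qf [hf [_ hPr]]]; move: hf; rewrite inE => /eqP Eq; subst qf.
    have := hPr (lp_empty Sigma) erefl; apply: Lang_iso; exact: seq_unit_r.
  case: q hg => [s|]; last by rewrite /= inE.
  have hs0 := ssvalP s; rewrite /=.
  case E: (ssval s) hs0 => [||b|f g|f g|f g|f] hs0 //=; rewrite ?inE //.
  + case: eqP => [/mset_nil/map_fst_nil Eps|]; rewrite ?inE // => /eqP Eq; subst ps q'.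
    have hn : lp_n P = 0 by apply: iso_n0 (iso_sym hP) _.
    by rewrite /= hn hW.
  + have [hf hg] := sub_kid_plus hs0.
    case: ifP; last by rewrite inE. case/orP=> [/eqP/mset_one/map_fst_one [U Eps]|/eqP/mset_one/map_fst_one [U Eps]];
      rewrite inE => /eqP Eq; subst ps q'; have := hk _ (or_introl erefl); rewrite /= ?Lang_st //.
    * move=> hU; left; apply: sem_iso hU; apply: iso_sym.
      exact: iso_trans (seq_unit_r P hW) (iso_trans hP (par_e U)).
    * move=> hU; right; apply: sem_iso hU; apply: iso_sym.
      exact: iso_trans (seq_unit_r P hW) (iso_trans hP (par_e U)).
  + have [hf hg] := sub_kid_seq hs0.
    case: eqP => [/mset_one/map_fst_one [U Eps]|]; rewrite ?inE // => /eqP Eq; subst ps q'.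
    have := hk _ (or_introl erefl); rewrite /= Lang_st // => hU.
    move: hW; rewrite Lang_st // => hW.
    exists U, W; split => //; apply: seq_congr (iso_refl W).
    exact: iso_trans hP (par_e U).
  + have [hf hg] := sub_kid_par hs0.
    case: eqP => [/mset_two [] /map_fst_two [U [V Eps]]|]; rewrite ?inE // => /eqP Eq; subst ps q'.
    * have := hk _ (or_introl erefl); rewrite /= Lang_st // => hU.
      have := hk _ (or_intror (or_introl erefl)); rewrite /= Lang_st // => hV.
      exists U, V; split => //.
      apply: iso_trans (seq_unit_r P hW) (iso_trans hP _).
      exact: par_congr (iso_refl U) (par_e V).
    * have := hk _ (or_introl erefl); rewrite /= Lang_st // => hV.
      have := hk _ (or_intror (or_introl erefl)); rewrite /= Lang_st // => hU.
      exists V, U; split => //.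
      apply: iso_trans (seq_unit_r P hW) (iso_trans hP _).
      apply: iso_trans _ (par_comm U V); exact: par_congr (iso_refl U) (par_e V).
  + have hf := sub_kid_star hs0.
    case/orP.
    * case: eqP => [/mset_nil/map_fst_nil Eps|]; rewrite ?inE // => /eqP Eq; subst ps q'.
      have hn : lp_n P = 0 by apply: iso_n0 (iso_sym hP) _.
      by exists 0; rewrite /= hn hW.
    * case: eqP => [/mset_one/map_fst_one [U Eps]|]; rewrite ?inE // => /eqP Eq; subst ps q'.
      have := hk _ (or_introl erefl); rewrite /= Lang_st // => hU.
      move: hW; rewrite /= E => -[n hn]; exists n.+1, U, W; split => //.
      apply: seq_congr (iso_refl W); exact: iso_trans hP (par_e U).
Qed.

Lemma complete f : f \in subterms e0 -> forall P, sem f P -> run (A:=Aut) (st f) P None.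
Proof.
elim: f => [||a|f IHf g IHg|f IHf g IHg|f IHf g IHg|f IHf] hs P //=; rewrite (stE hs).
- move=> h; apply: (@run_par _ Aut _ None [::]) => //=; first by rewrite eqxx inE.
  exact: iso_empty.
- move=> h; apply: (@run_atom _ Aut _ a) => //=; by rewrite eqxx inE.
- have [hf hg] := sub_kid_plus hs.
  case=> h.
  + apply: (@run_par _ Aut _ None [:: (st f, P)]) => /=; first by rewrite eqxx inE.
    * by move=> x [<-|//]; exists None; split; [rewrite inE | apply: IHf].
    * exact: iso_sym (par_e P).
  + apply: (@run_par _ Aut _ None [:: (st g, P)]) => /=; first by rewrite eqxx orbT inE.
    * by move=> x [<-|//]; exists None; split; [rewrite inE | apply: IHg].
    * exact: iso_sym (par_e P).
- have [hf hg] := sub_kid_seq hs.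
  move=> [U [V [hU hV hP]]]; apply: (@run_seq _ Aut _ (st g) _ U V) => //; last exact: IHg.
  apply: (@run_par _ Aut _ (st g) [:: (st f, U)]) => /=; first by rewrite eqxx inE.
  * by move=> x [<-|//]; exists None; split; [rewrite inE | apply: IHf].
  * exact: iso_sym (par_e U).
- have [hf hg] := sub_kid_par hs.
  move=> [U [V [hU hV hP]]].
  apply: (@run_par _ Aut _ None [:: (st f, U); (st g, V)]) => /=; first by rewrite eqxx inE.
  * move=> x [<-|[<-|//]]; exists None; split; rewrite ?inE //; [apply: IHf | apply: IHg] => //.
  * apply: iso_trans hP _; exact: par_congr (iso_refl U) (iso_sym (par_e V)).
- have hf := sub_kid_star hs.
  move=> [n]; elim: n P => [|n IHn] P /=.
  + move=> h; apply: (@run_par _ Aut _ None [::]) => //=; first by rewrite eqxx !inE.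
    exact: iso_empty.
  + move=> [U [V [hU hV hP]]]; apply: (@run_seq _ Aut _ (Some (SeqSub hs)) _ U V) => //; last exact: IHn.
    apply: (@run_par _ Aut _ (Some (SeqSub hs)) [:: (st f, U)]) => /=.
    * by rewrite in_setU eqxx !inE eqxx orbT.
    * by move=> x [<-|//]; exists None; split; [rewrite inE | apply: IHf].
    * exact: iso_sym (par_e U).
Qed.

Lemma dir1 : exists (A : pomset_automaton Sigma) (q : pa_Q A),
  fork_acyclic A /\ forall P, sem e0 P <-> LA A q P.
Proof.
exists Aut, (st e0); split; first exact: Aut_acyclic.
move=> P; split.
- move=> h; split; first exact: sem_SP h.
  by exists None; split; [rewrite inE | apply: complete (sub_self e0) _ h].
- move=> [_ [q' [hq r]]]; move: hq; rewrite inE => /eqP Eq; subst q'.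
  have := sound r (W := lp_empty Sigma) erefl; rewrite Lang_st ?sub_self //.
  apply: sem_iso; exact: seq_unit_r.
Qed.
End Construct.


Section Kleene.
Variable Sigma : finType.
Notation lp := (lposet Sigma).
Notation iso := (@lp_iso Sigma).
Variable V : finType.
Variable Edge : V -> lp -> V -> Prop.
Hypothesis Eexp : forall s t, expr (fun P => Edge s P t).

Inductive npath (S : pred V) : V -> lp -> V -> Prop :=
| np_one i j X P : Edge i X j -> iso P X -> npath S i P j
| np_cons i m j X Y P : Edge i X m -> S m -> npath S m Y j -> iso P (lp_seq X Y) -> npath S i P j.

Lemma npath_iso S i j P P' : npath S i P j -> iso P P' -> npath S i P' j.
Proof.
case=> [i0 j0 X P0 hE hP | i0 m j0 X Y P0 hE hm h hP] h'.
- exact: np_one hE (iso_trans (iso_sym h') hP).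
- exact: np_cons hE hm h (iso_trans (iso_sym h') hP).
Qed.

Lemma npath_mono (S S' : pred V) : (forall m, S m -> S' m) ->
  forall i P j, npath S i P j -> npath S' i P j.
Proof.
move=> hS i P j; elim=> [i0 j0 X P0 hE hP | i0 m j0 X Y P0 hE hm h IH hP].
- exact: np_one hE hP.
- exact: np_cons hE (hS _ hm) IH hP.
Qed.

Lemma npath_app S i m j U W P : npath S i U m -> S m -> npath S m W j ->
  iso P (lp_seq U W) -> npath S i P j.
Proof.
move=> h; move: j W P; elim: h => [i0 m0 X U0 hE hU | i0 m1 m0 X Y U0 hE hS h IH hU] j W P hm hW hP.
- apply: np_cons hE hm hW _; exact: iso_trans hP (seq_congr hU (iso_refl W)).
- apply: np_cons hE hS (IH _ _ _ hm hW (iso_refl _)) _.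
  apply: iso_trans hP (iso_trans (seq_congr hU (iso_refl W)) _); exact: seq_assoc.
Qed.

Section Step.
Variables (k : V) (s : seq V).
Notation R := (npath (fun m => m \in s)).
Notation R' := (npath (fun m => m \in k :: s)).

Definition decomp i j :=
  lang_seq (fun U => R i U k) (lang_seq (lang_star (fun W => R k W k)) (fun Vv => R k Vv j)).

Lemma kl_fwd i P j : R' i P j -> R i P j \/ decomp i j P.
Proof.
elim=> [i0 j0 X P0 hE hP | i0 m j0 X Y P0 hE hm h IH hP].
- by left; apply: np_one hE hP.
- case: (m =P k) => [Emk | nmk].
  + subst m; right; case: IH => [hY | [U [Z [hU [W [V' [[n hW] hV hZ]]] hY]]]].
    * exists X, (lp_seq (lp_empty Sigma) Y); split.
      -- exact: np_one hE (iso_refl X).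
      -- exists (lp_empty Sigma), Y; split => //; first by exists 0.
         exact: iso_refl.
      -- apply: iso_trans hP (seq_congr (iso_refl X) _); apply: iso_sym; exact: seq_unit_l.
    * exists X, (lp_seq (lp_seq U W) V'); split.
      -- exact: np_one hE (iso_refl X).
      -- exists (lp_seq U W), V'; split => //; last exact: iso_refl.
         by exists n.+1, U, W; split => //; exact: iso_refl.
      -- apply: iso_trans hP (seq_congr (iso_refl X) _).
         apply: iso_trans hY (iso_trans (seq_congr (iso_refl U) hZ) _).
         apply: iso_sym; exact: seq_assoc.
  + have hm' : m \in s by move: hm; rewrite inE => /orP [/eqP//|].
    case: IH => [hY | [U [Z [hU hZ hY]]]].
    * by left; apply: np_cons hE hm' hY hP.
    * right; exists (lp_seq X U), Z; split => //.
      -- exact: np_cons hE hm' hU (iso_refl _).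
      -- apply: iso_trans hP (iso_trans (seq_congr (iso_refl X) hY) _).
         apply: iso_sym; exact: seq_assoc.
Qed.

Lemma star_np n W : lang_pow (fun W => R k W k) n W -> lp_n W = 0 \/ R' k W k.
Proof.
elim: n W => [|n IH] W /=; first by left.
move=> [U [W' [hU hW' hW]]]; right.
have hU' : R' k U k by apply: npath_mono hU => m; rewrite inE => ->; rewrite orbT.
case: (IH _ hW') => [h0 | hp].
- apply: npath_iso hU' _; apply: iso_sym; exact: iso_trans hW (seq_unit_r U h0).
- by apply: npath_app hU' _ hp hW; rewrite mem_head.
Qed.

Lemma kl_bwd i P j : R i P j \/ decomp i j P -> R' i P j.
Proof.
have mono : forall i P j, R i P j -> R' i P j.
  by move=> *; apply: npath_mono; last eassumption; move=> m; rewrite inE => ->; rewrite orbT.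
case=> [/mono // | [U [Z [hU [W [V' [[n hW] hV hZ]]] hP]]]].
have hk : k \in k :: s by rewrite mem_head.
case: (star_np hW) => [h0 | hp].
- apply: npath_app (mono _ _ _ hU) hk (mono _ _ _ hV) _.
  apply: iso_trans hP (seq_congr (iso_refl U) (iso_trans hZ (seq_unit_l V' h0))).
- apply: npath_app (mono _ _ _ hU) hk (npath_app hp hk (mono _ _ _ hV) hZ) hP.
Qed.
End Step.

Lemma kleene (s : seq V) i j : expr (fun P => npath (fun m => m \in s) i P j).
Proof.
elim: s i j => [|k s IH] i j.
- have [e he] := Eexp i j; exists e => P; split.
  + move=> h; inversion h as [i0 j0 X P0 hE hP| i0 m j0 X Y P0 _ hm]; subst; last by rewrite in_nil in hm.
    move: hE; rewrite he; exact: sem_iso (iso_sym hP).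
  + by move=> h; apply: np_one (iso_refl P); rewrite he.
- apply: expr_ext (expr_plus (IH i j) (expr_seq (IH i k) (expr_seq (expr_star (IH k k)) (IH k j)))).
  move=> P; split; [exact: kl_bwd | exact: kl_fwd].
Qed.

Lemma kleene_all i j : expr (fun P => (i = j /\ lp_n P = 0) \/ npath predT i P j).
Proof.
have [e he] := kleene (enum V) i j.
have E : forall P, npath predT i P j <-> sem e P.
  move=> P; rewrite -he; split; apply: npath_mono => m //; by rewrite mem_enum.
case: (i =P j) => [Eij|nij]; first subst j.
- exists (e_plus (e_one Sigma) e) => P /=; rewrite -E; split.
  + by case=> [[_ h]|h]; [left | right].
  + by case=> [h|h]; [left | right].
- exists e => P; rewrite -E; split; first by case=> [[]|].
  by move=> h; right.
Qed.
End Kleene.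


Definition pb (P : Prop) : bool := if excluded_middle_informative P then true else false.
Lemma pbP (P : Prop) : reflect P (pb P).
Proof. by rewrite /pb; case: excluded_middle_informative => h; constructor. Qed.

Section AutExpr.
Variable Sigma : finType.
Notation lp := (lposet Sigma).
Notation iso := (@lp_iso Sigma).
Variable A : pomset_automaton Sigma.
Notation Q := (pa_Q A).
Hypothesis FA : fork_acyclic A.

Definition acc (q : Q) (P : lp) := exists qf, qf \in pa_F A /\ run q P qf.

Lemma sup_trans (x y z : Q) : supports x y -> supports y z -> supports x z.
Proof. exact: rt_trans. Qed.
Lemma sup_step (x y : Q) : supp_step x y -> supports x y.
Proof. exact: rt_step. Qed.
Lemma sup_refl (x : Q) : supports x x.
Proof. exact: rt_refl. Qed.

Definition down (q : Q) : {set Q} := [set t | pb (supports t q)].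
Definition mu (q : Q) := #|down q|.

Lemma mu_lt (s q r : Q) (phi : {ffun Q -> nat}) : supports s q -> 0 < phi r -> pa_gamma s phi != set0 -> mu r < mu q.
Proof.
move=> hsq h0 hg; apply: proper_card; apply/properP; split.
- apply/subsetP => t; rewrite !inE => /pbP h; apply/pbP.
  apply: sup_trans h (sup_trans (sup_step _) hsq).
  by right; right; exists phi.
- exists q; rewrite !inE; first by apply/pbP; apply: sup_refl.
  apply/pbP => h; apply: (FA h0 hg); exact: sup_trans hsq h.
Qed.

Definition Edge (s : Q) (X : lp) (t : Q) : Prop :=
  (exists a, t \in pa_delta s a /\ iso X (lp_atom a)) \/
  (exists ps : seq (Q * lp), t \in pa_gamma s (mset_of (map fst ps)) /\
     (forall x, List.In x ps -> acc x.1 x.2) /\ iso X (lp_bigpar (map snd ps))).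

Lemma run_supp (q q' : Q) (P : lp) : run q P q' -> supports q' q.
Proof.
move: q P q'; apply: run_ind'.
- move=> q P _; exact: sup_refl.
- by move=> q a q' P h _; apply: sup_step; left; exists a.
- move=> q q'' q' U V P _ h1 _ h2 _; exact: sup_trans h2 h1.
- move=> q q' ps P h _ _; apply: sup_step; right; left; by exists (mset_of (map fst ps)).
Qed.

Variable q0 : Q.
Definition Er (s : Q) (X : lp) (t : Q) := supports s q0 /\ Edge s X t.

Lemma run_np (q q' : Q) (P : lp) : run q P q' -> supports q q0 ->
  (q = q' /\ lp_n P = 0) \/ npath Er predT q P q'.
Proof.
move: q P q'; apply: run_ind'.
- by move=> q P h _; left.
- move=> q a q' P h hP hs; right; apply: np_one (iso_refl P).
  by split => //; left; exists a.
- move=> q q'' q' U V P r1 IH1 r2 IH2 hP hs.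
  have hs' : supports q'' q0 := sup_trans (run_supp r1) hs.
  case: (IH1 hs) => [[E1 n1] | p1]; case: (IH2 hs') => [[E2 n2] | p2].
  + subst; left; split => //; apply: iso_n0 (iso_sym hP) _; by rewrite /= n1 n2.
  + subst; right; apply: npath_iso p2 _; apply: iso_sym; exact: iso_trans hP (seq_unit_l V n1).
  + subst; right; apply: npath_iso p1 _; apply: iso_sym; exact: iso_trans hP (seq_unit_r U n2).
  + by right; apply: npath_app p1 _ p2 hP.
- move=> q q' ps P h hc hP hs; right; apply: np_one (iso_refl P); split => //.
  right; exists ps; split => //; split => // x /hc [qf [hf [r _]]]; by exists qf.
Qed.

Lemma edge_run (s t : Q) (X : lp) : Edge s X t -> run s X t.
Proof.
case=> [[a [h hX]] | [ps [h [hc hX]]]].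
- exact: run_atom h hX.
- apply: run_par h _ hX => x /hc [qf [hf r]]; by exists qf.
Qed.

Lemma run_iso (q q' : Q) (X P : lp) : run q X q' -> iso P X -> run q P q'.
Proof.
case=> {q X q'}.
- move=> q X h hP; apply: run_one; exact: iso_n0 (iso_sym hP) h.
- move=> q a q' X h hX hP; exact: run_atom h (iso_trans hP hX).
- move=> q q'' q' U V X r1 r2 hX hP; exact: run_seq r1 r2 (iso_trans hP hX).
- move=> q q' ps X h hc hX hP; exact: run_par h hc (iso_trans hP hX).
Qed.

Lemma np_run S (q q' : Q) (P : lp) : npath Er S q P q' -> run q P q'.
Proof.
elim=> [i j X P0 [_ hE] hP | i m j X Y P0 [_ hE] _ _ IH hP].
- exact: run_iso (edge_run hE) hP.
- exact: run_seq (edge_run hE) IH hP.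
Qed.
End AutExpr.

Lemma expr_ext' (Sigma : finType) (L K : lposet Sigma -> Prop) :
  (forall P, K P <-> L P) -> expr L -> expr K.
Proof. move=> h; apply: expr_ext => P; exact: iff_sym (h P). Qed.

Section AutExpr2.
Variable Sigma : finType.
Notation lp := (lposet Sigma).
Notation iso := (@lp_iso Sigma).
Variable A : pomset_automaton Sigma.
Notation Q := (pa_Q A).
Hypothesis FA : fork_acyclic A.

Definition ParL (l : seq Q) (X : lp) : Prop :=
  exists ps : seq (Q * lp), map fst ps = l /\ (forall x, List.In x ps -> acc x.1 x.2) /\
    iso X (lp_bigpar (map snd ps)).

Lemma ParL_expr (l : seq Q) : (forall r, r \in l -> expr (acc r)) -> expr (ParL l).
Proof.
elim: l => [|r l IH] h.
- apply: expr_ext (expr_one Sigma) => X; split.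
  + by move=> h0; exists [::]; split => //; split => //; exact: iso_empty.
  + move=> [ps [hm [_ hX]]]; case: ps hm hX => [|//] _ hX; exact: iso_n0 (iso_sym hX) erefl.
- have hr : expr (acc r) by apply: h; rewrite mem_head.
  have hl : expr (ParL l) by apply: IH => r' hr'; apply: h; rewrite inE hr' orbT.
  apply: expr_ext (expr_par hr hl) => X; split.
  + move=> [U [W [hU [ps [hm [hc hW]]] hX]]]; exists ((r, U) :: ps); split; first by rewrite /= hm.
    split; first by move=> x [<-|/hc].
    exact: iso_trans hX (par_congr (iso_refl U) hW).
  + move=> [[|[r' U] ps] [//= [Er hm] [hc hX]]]; subst r'.
    exists U, (lp_bigpar (map snd ps)); split => //.
    * exact: (hc (r, U) (or_introl erefl)).
    * exists ps; split => //; split; last exact: iso_refl.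
      by move=> x hx; apply: hc; right.
Qed.

Definition ForkLang (phi : {ffun Q -> nat}) (X : lp) : Prop :=
  exists ps : seq (Q * lp), mset_of (map fst ps) = phi /\ (forall x, List.In x ps -> acc x.1 x.2) /\
    iso X (lp_bigpar (map snd ps)).

Lemma ForkLang_expr (phi : {ffun Q -> nat}) : (forall r, 0 < phi r -> expr (acc r)) -> expr (ForkLang phi).
Proof.
move=> h.
case: (classic (exists l0 : seq Q, mset_of l0 = phi)) => [[l0 hl0] | nl].
- have E : forall X, ForkLang phi X <-> exists l, l \in permutations l0 /\ ParL l X.
    move=> X; split.
    + move=> [ps [hm [hc hX]]]; exists (map fst ps); split; last by exists ps.
      rewrite mem_permutations; apply: mset_perm; rewrite /mset'.
      by have := hm; rewrite -hl0 /mset_of.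
    + move=> [l [hl [ps [hm [hc hX]]]]]; exists ps; split => //; rewrite -hl0 hm.
      rewrite mem_permutations in hl; apply/ffunP => r; rewrite !ffunE.
      exact: (permP hl (pred1 r)).
  apply: expr_ext' E _; apply: expr_union => l hl; apply: ParL_expr => r hr; apply: h.
  rewrite -hl0 ffunE lt0n; apply/negP => /eqP /count_memPn /negP; apply.
  by rewrite mem_permutations in hl; rewrite -(perm_mem hl).
- apply: expr_zero => X [ps [hm _]]; apply: nl; by exists (map fst ps).
Qed.

Lemma Edge_expr (q0 s t : Q) :
  (forall r : Q, mu r < mu q0 -> expr (acc r)) -> expr (fun X => Er q0 s X t).
Proof.
move=> IH; case: (classic (supports s q0)) => hs; last by apply: expr_zero => X [].
have [fl hfl] := pa_gamma_fin s.
have E : forall X, Er q0 s X t <->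
   (exists a, a \in enum Sigma /\ (t \in pa_delta s a /\ iso X (lp_atom a))) \/
   (exists phi, phi \in fl /\ (t \in pa_gamma s phi /\ ForkLang phi X)).
  move=> X; split.
  + move=> [_ [[a [h1 h2]] | [ps [h1 [h2 h3]]]]].
    * by left; exists a; rewrite mem_enum.
    * right; exists (mset_of (map fst ps)); split; last by split => //; exists ps.
      by apply: hfl; apply/set0Pn; exists t.
  + move=> [[a [_ [h1 h2]]] | [phi [_ [h1 [ps [hm [hc hX]]]]]]]; split => //.
    * by left; exists a.
    * by right; exists ps; rewrite hm.
apply: expr_ext' E _; apply: expr_plus.
- apply: expr_union => a _; case: (boolP (t \in pa_delta s a)) => ht.
  + by exists (e_atom a) => X /=; split; [case | split].
  + by apply: expr_zero => X [].
- apply: expr_union => phi _; case: (boolP (t \in pa_gamma s phi)) => ht.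
  + have [e he] : expr (ForkLang phi).
      apply: ForkLang_expr => r hr; apply: IH; apply: (@mu_lt _ _ FA s q0 r phi hs hr).
      by apply/set0Pn; exists t.
    by exists e => X; rewrite -he; split; [case | split].
  + by apply: expr_zero => X [].
Qed.

Lemma acc_expr n (q : Q) : mu q < n -> expr (acc q).
Proof.
elim: n q => [//|n IH] q hq.
have IH' : forall r : Q, mu r < mu q -> expr (acc r).
  by move=> r hr; apply: IH; apply: leq_trans hr _; rewrite -ltnS.
have K := kleene_all (fun s t => Edge_expr s t IH').
have E : forall P, acc q P <-> exists qf, qf \in enum Q /\
    (qf \in pa_F A /\ ((q = qf /\ lp_n P = 0) \/ npath (Er q) predT q P qf)).
  move=> P; split.
  + move=> [qf [hf r]]; exists qf; rewrite mem_enum; split => //; split => //.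
    exact: run_np r (sup_refl q).
  + move=> [qf [_ [hf [[Eq h0] | hp]]]]; exists qf; split => //.
    * by subst qf; apply: run_one.
    * exact: np_run hp.
apply: expr_ext' E _; apply: expr_union => qf _.
case: (boolP (qf \in pa_F A)) => hf.
- have [e he] := K q qf; exists e => P; rewrite -he; split; [case | split] => //.
- by apply: expr_zero => P [].
Qed.
End AutExpr2.

Theorem theorem8p5 (Sigma : finType) (L : lposet Sigma -> Prop) :
  pomset_language L ->
  ((exists e : srexp Sigma, forall P, L P <-> sem e P) <->
   (exists (A : pomset_automaton Sigma) (q : pa_Q A),
      fork_acyclic A /\ forall P, L P <-> LA A q P)).
Proof.
move=> _; split.
- move=> [e he]; have [A [q [fa hA]]] := dir1 e.
  exists A, q; split => // P; rewrite he; exact: hA.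
- move=> [A [q [fa hL]]]; have [e he] := acc_expr fa (ltnSn (mu q)).
  exists e => P; rewrite hL; split.
  + by move=> [_ h]; rewrite -he.
  + move=> h; split; first exact: sem_SP h.
    exact: (proj2 (he P) h).
Qed.
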